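(* Let $\Gamma$ be a weighted digraph with vertex set $\{1,\dots,n\}$, $n>1$, without loops and with strictly positive arc weights, with Laplacian matrix $L$, in-forest dimension $d$, and let $\tilde J=\sigma_{n-d}^{-1}Q_{n-d}$. Then $$\tilde J=\lim_{\tau\to\infty}J(\tau)=\lim_{\tau\to\infty}(I+\tau L)^{-1}.$$
   Context: $W=(w_{ij})$ is the matrix of arc weights ($w_{ij}>0$ iff there is an arc $i\to j$, else $0$). The Laplacian $L=(\ell_{ij})$: $\ell_{ij}=-w_{ij}$ for $j\ne i$, $\ell_{ii}=\sum_{k\ne i}w_{ik}$. The weight of a subgraph is the product of its arc weights (1 if no arcs); the weight of a set of subgraphs is the sum of their weights. A converging tree is a weakly connected digraph with one vertex (the root) of outdegree 0 and all others of outdegree 1; an in-forest is a spanning subgraph of $\Gamma$ whose weak components are converging trees. The in-forest dimension $d$ is the minimal number of trees in an in-forest (so in-forests have at most $n-d$ arcs). $\sigma_k$ is the total weight of in-forests with $k$ arcs; $Q_k=(q^k_{ij})$ with $q^k_{ij}$ the total weight of in-forests with $k$ arcs in which $i$ lies in a tree rooted at $j$. For $\tau\ge0$, $Q(\tau)=\sum_{k=0}^{n-d}Q_k\tau^k$, $\sigma(\tau)=\sum_{k=0}^{n-d}\sigma_k\tau^k$ and $J(\tau)=\sigma(\tau)^{-1}Q(\tau)$. *)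

(* Defs.v *)
From HB Require Import structures.
From mathcomp Require Import all_boot all_order all_algebra.
From mathcomp Require Import all_classical all_reals all_analysis.
Set Implicit Arguments. Unset Strict Implicit. Unset Printing Implicit Defensive.
Import Order.TTheory GRing.Theory Num.Theory.
Local Open Scope ring_scope.

Section InForests.
Variables (R : realType) (n : nat).
Implicit Types (w : 'M[R]_n).

Definition laplacian w : 'M[R]_n :=
  \matrix_(i, j) (if i == j then \sum_(k | k != i) w i k else - w i j).

(* A spanning subgraph in which every vertex has outdegree <= 1 is encoded by
   f : vertex -> option vertex (f i = Some j  iff  the arc i -> j is present). *)
Definition step (f : {ffun 'I_n -> option 'I_n}) (x : option 'I_n) :=
  obind f x.

(* f is an in-forest of the digraph with weights w: every chosen arc is an arc
   of Gamma (positive weight) and there are no cycles (following the arcs from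
   any vertex one leaves the graph after at most n steps), so that the weak
   components are converging trees. *)
Definition inforest w (f : {ffun 'I_n -> option 'I_n}) : bool :=
  [forall i, forall j, (f i == Some j) ==> (0 < w i j)] &&
  [forall i, iter n (step f) (Some i) == None].

Definition narcs (f : {ffun 'I_n -> option 'I_n}) : nat := #|[set i | f i != None]|.
Definition ntrees (f : {ffun 'I_n -> option 'I_n}) : nat := #|[set i | f i == None]|.

Definition fweight w (f : {ffun 'I_n -> option 'I_n}) : R :=
  \prod_(i : 'I_n) (if f i is Some j then w i j else 1).

Definition rooted_at (f : {ffun 'I_n -> option 'I_n}) (i j : 'I_n) : bool :=
  (f j == None) && [exists k : 'I_n.+1, iter k (step f) (Some i) == Some j].

Definition inforest_dim w : nat :=
  \big[minn/n]_(f | inforest w f) ntrees f.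

Definition sigmak w (k : nat) : R :=
  \sum_(f | inforest w f && (narcs f == k)) fweight w f.

Definition Qk w (k : nat) : 'M[R]_n :=
  \matrix_(i, j) \sum_(f | [&& inforest w f, narcs f == k & rooted_at f i j])
                    fweight w f.

Definition sigma_t w (tau : R) : R :=
  \sum_(k < (n - inforest_dim w).+1) sigmak w k * tau ^+ k.

Definition Q_t w (tau : R) : 'M[R]_n :=
  \sum_(k < (n - inforest_dim w).+1) (tau ^+ k) *: Qk w k.

Definition J_t w (tau : R) : 'M[R]_n := (sigma_t w tau)^-1 *: Q_t w tau.

Definition J_tilde w : 'M[R]_n :=
  (sigmak w (n - inforest_dim w))^-1 *: Qk w (n - inforest_dim w).

End InForests.

(* Main.v *)
Require Import Defs.
From HB Require Import structures.
From mathcomp Require Import all_boot all_order all_algebra.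
From mathcomp Require Import all_classical all_reals all_analysis.
From mathcomp Require Import zify ring lra.
Import Order.TTheory GRing.Theory Num.Theory.
Import numFieldNormedType.Exports.
Local Open Scope classical_set_scope.
Local Open Scope ring_scope.
Section Paths.
Variable n : nat.
Local Notation FF := {ffun 'I_n -> option 'I_n}.
Implicit Types (f g G H : FF) (x y i j m : 'I_n).

Definition it f k x := iter k (step f) (Some x).
Definition acyc f := forall x, it f n x = None.
Definition avoid f x i := forall k, it f k x != Some i.

Lemma iter_None f k : iter k (step f) None = None.
Proof. by elim: k => //= k ->. Qed.

Lemma itS f k x : it f k.+1 x = obind f (it f k x).
Proof. by []. Qed.

Lemma itSr f k x : it f k.+1 x = if f x is Some y then it f k y else None.
Proof. rewrite /it iterSr /=; case: (f x) => // ; exact: iter_None. Qed.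

Lemma itD f a b x : it f (a + b) x = iter a (step f) (it f b x).
Proof. by rewrite /it iterD. Qed.

Lemma it_None_le {f k k' x} : it f k x = None -> (k <= k')%N -> it f k' x = None.
Proof. by move=> h /subnK <-; rewrite itD h iter_None. Qed.

Lemma it_root {f k x y} : it f k x = Some y -> f y = None -> forall p, (k < p)%N -> it f p x = None.
Proof. by move=> h hy p /subnK <-; rewrite itD itS h /= hy iter_None. Qed.
Lemma two_roots {f a b k1 k2 x} : f a = None -> f b = None ->
  it f k1 x = Some a -> it f k2 x = Some b -> a = b.
Proof.
move=> ha hb h1 h2.
case: (ltngtP k1 k2) => [lt|lt|eq].
- by move: (it_root h1 ha _ lt); rewrite h2.
- by move: (it_root h2 hb _ lt); rewrite h1.
- by move: h1; rewrite eq h2 => -[].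
Qed.

Lemma it_cycle {f k x} : it f k x = Some x -> forall q, it f (k * q) x = Some x.
Proof.
move=> h; elim=> [|q IH]; first by rewrite muln0.
by rewrite mulnS itD IH.
Qed.

Lemma acyc_lt {f k x y} : acyc f -> it f k x = Some y -> (k < n)%N.
Proof.
move=> ac h; rewrite ltnNge; apply/negP => le.
by move: (it_None_le (ac x) le); rewrite h.
Qed.

Lemma acyc_nocycle {f k x} : acyc f -> it f k x = Some x -> k = 0%N.
Proof.
move=> ac h; case: k h => // k h.
have := acyc_lt ac (it_cycle h n).
by rewrite mulSn ltnNge leq_addr.
Qed.
Lemma acyc_ev {f} : (forall x, exists k, it f k x = None) -> acyc f.
Proof.
move=> ev x; case E: (it f n x) => [y|] //.
have nN : forall p, (p <= n)%N -> it f p x != None.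
  move=> p le; apply/negP => /eqP hp.
  by move: (it_None_le hp le); rewrite E.
pose g (p : 'I_n.+1) : 'I_n := odflt y (it f p x).
have : ~~ injectiveb g.
  apply/negP => /injectiveP inj; move: (leq_card _ inj).
  by rewrite !card_ord ltnn.
case/injectivePn => p1 [p2 ne eqg].
have key : forall a b : 'I_n.+1, (a < b)%N -> g a = g b -> False.
  move=> a b ab; rewrite /g.
  case Ea: (it f a x) => [za|]; last by move: (nN a (ltn_ord a)); rewrite Ea.
  case Eb: (it f b x) => [zb|]; last by move: (nN b (ltn_ord b)); rewrite Eb.
  move=> /= ezz; subst zb.
  have cyc : it f (b - a) za = Some za.
    have := itD f (b - a) a x; rewrite subnK; last exact: ltnW.
    by rewrite Eb Ea.
  have [k hk] := ev za.
  have := it_cycle cyc k.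
  rewrite (it_None_le hk) //.
  by rewrite leq_pmull // subn_gt0.
case: (ltngtP p1 p2) => [lt|lt|eq].
- by case: (key _ _ lt eqg).
- by case: (key _ _ lt (esym eqg)).
- by move: ne; rewrite (val_inj eq) eqxx.
Qed.

Lemma agree {f g i x k} : (forall y, y != i -> g y = f y) ->
  (forall k', (k' < k)%N -> it f k' x != Some i) -> it g k x = it f k x.
Proof.
move=> hfg; elim: k => [//|k IH] h.
rewrite !itS IH; last by move=> k' lt; apply: h; exact: ltnW.
case E: (it f k x) => [y|] //=.
apply: hfg; apply/eqP => yi; subst y.
by move: (h k (ltnSn k)); rewrite E eqxx.
Qed.

Lemma agree_avoid {f g i x} : (forall y, y != i -> g y = f y) ->
  avoid f x i -> forall k, it g k x = it f k x.
Proof. by move=> hfg av k; apply: (agree hfg) => k' _; exact: av. Qed.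

Lemma avoid_agree {f g i x} : (forall y, y != i -> g y = f y) ->
  avoid f x i -> avoid g x i.
Proof. by move=> hfg av k; rewrite (agree_avoid hfg av). Qed.

Lemma acyc_upd {f g i} : acyc f -> (forall y, y != i -> g y = f y) ->
  (if g i is Some m then avoid f m i else True) -> acyc g.
Proof.
move=> ac hfg hgi; apply: acyc_ev => x.
case: (pselect (exists p, it f p x == Some i)) => [ex|nex]; last first.
  exists n; rewrite (agree_avoid hfg) ?ac // => k; apply/negP => hk.
  by apply: nex; exists k.
pose p := ex_minn ex.
have hp : it f p x = Some i by apply/eqP; rewrite /p; case: ex_minnP.
have hmin : forall k', (k' < p)%N -> it f k' x != Some i.
  move=> k' lt; apply/negP => hk; move: lt; rewrite /p; case: ex_minnP => p0 _ hm.
  by move/(_ k' hk): hm; rewrite leqNgt => /negP.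
have hg : it g p x = Some i by rewrite (agree hfg hmin).
move: hgi; case E: (g i) => [m|] hav.
- exists (n + p.+1)%N; rewrite itD itS hg /= E.
  by rewrite -/(it g n m) (agree_avoid hfg hav) ac.
- by exists p.+1; rewrite itS hg /= E.
Qed.

Lemma acyc_next_avoid {f i m} : acyc f -> f i = Some m -> avoid f m i.
Proof.
move=> ac fi k; apply/negP => /eqP h.
have : it f k.+1 i = Some i by rewrite itSr fi.
by move/(acyc_nocycle ac).
Qed.

Lemma reach_root {f j q p x y} : f j = None -> it f q x = Some j ->
  it f p x = Some y -> it f (q - p) y = Some j.
Proof.
move=> hj hq hp; case: (leqP p q) => le.
  by have := itD f (q - p) p x; rewrite subnK // hq hp.
by move: (it_root hq hj _ le); rewrite hp.
Qed.
Lemma rooted_root {f x j} : rooted_at f x j -> f j = None.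
Proof. by case/andP => /eqP. Qed.

Lemma rooted_it {f x j} : rooted_at f x j -> exists k, it f k x = Some j.
Proof. by case/andP => _ /existsP [k /eqP h]; exists k. Qed.

Lemma rootedP {f x j} : acyc f ->
  rooted_at f x j <-> (f j = None /\ exists k, it f k x = Some j).
Proof.
move=> ac; split=> [h|[hj [k hk]]]; first by split; [exact: (rooted_root h)|exact: (rooted_it h)].
apply/andP; split; first by rewrite hj.
apply/existsP; have lt : (k < n.+1)%N by apply: ltnW; exact: (acyc_lt ac hk).
by exists (Ordinal lt); rewrite /= -/(it f k x) hk.
Qed.

Lemma rooted_nonroot {f i j} : rooted_at f i j -> i != j -> f i != None.
Proof.
move=> /rooted_it [[|k] hk] ne; first by move: hk; rewrite /it /= => -[] eij; rewrite eij eqxx in ne.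
by apply/negP => /eqP fi; move: hk; rewrite itSr fi.
Qed.

Lemma rooted_ii {f i} : rooted_at f i i = (f i == None).
Proof.
apply/idP/idP; first by move/rooted_root/eqP.
move=> h; apply/andP; split=> //; apply/existsP; by exists ord0.
Qed.

Definition upd f i (o : option 'I_n) : FF := [ffun y => if y == i then o else f y].

Lemma upd_i {f i o} : upd f i o i = o.
Proof. by rewrite ffunE eqxx. Qed.

Lemma upd_ne {f i o} : forall y, y != i -> upd f i o y = f y.
Proof. by move=> y ne; rewrite ffunE (negbTE ne). Qed.

Lemma upd_ne' {f i o} : forall y, y != i -> f y = upd f i o y.
Proof. by move=> y ne; rewrite upd_ne. Qed.

Lemma upd_upd {f i o o'} : upd (upd f i o) i o' = upd f i o'.
Proof. apply/ffunP => y; rewrite !ffunE. case: (y == i) => //. Qed.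

Lemma upd_id {f i} : upd f i (f i) = f.
Proof. by apply/ffunP => y; rewrite !ffunE; case: eqP => // ->. Qed.

Lemma narcs_upd {f i o} : (narcs (upd f i o) + (f i != None) = narcs f + (o != None))%N.
Proof.
rewrite /narcs (cardsD1 i [set y | f y != None]) (cardsD1 i [set y | upd f i o y != None]).
rewrite !inE upd_i.
have -> : [set y | upd f i o y != None] :\ i = [set y | f y != None] :\ i.
  by apply/setP => y; rewrite !inE; case: eqP => // /eqP ne; rewrite upd_ne.
lia.
Qed.

Lemma ntrees_narcs f : (ntrees f + narcs f = n)%N.
Proof.
rewrite /ntrees /narcs addnC.
have -> : [set i | f i == None]%SET = (~: [set i | f i != None])%SET.
  by apply/setP => y; rewrite !inE negbK.
by rewrite cardsC card_ord.
Qed.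

Lemma rootedI {f x j k} : acyc f -> f j = None -> it f k x = Some j -> rooted_at f x j.
Proof. by move=> ac hj hk; apply/(rootedP ac); split => //; exists k. Qed.
Section Forest.
Variables (R : realType) (w : 'M[R]_n).

Definition arcsP f := forall i j, f i = Some j -> 0 < w i j.

Lemma forestP f : inforest w f <-> arcsP f /\ acyc f.
Proof.
split.
- case/andP => /forallP ha /forallP hc; split.
  + move=> i j e; have /forallP := ha i; move/(_ j)/implyP; apply; exact/eqP.
  + by move=> x; apply/eqP; exact: hc.
- case=> ha hc; apply/andP; split.
  + apply/forallP => i; apply/forallP => j; apply/implyP => /eqP e; exact: ha e.
  + by apply/forallP => x; apply/eqP; exact: hc.
Qed.

Lemma arcs_upd {f i o} : arcsP f -> (forall m, o = Some m -> 0 < w i m) -> arcsP (upd f i o).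
Proof.
move=> ha ho y z; case: (eqVneq y i) => [->|ne]; first by rewrite upd_i; exact: ho.
by rewrite upd_ne //; exact: ha.
Qed.

Definition ow i (o : option 'I_n) : R := if o is Some j then w i j else 1.

Lemma fweight_upd f i o : fweight w (upd f i o) * ow i (f i) = fweight w f * ow i o.
Proof.
rewrite /fweight (bigD1 i) //= [in RHS](bigD1 i) //= upd_i.
have -> : \prod_(y < n | y != i) (if upd f i o y is Some j then w y j else 1)
        = \prod_(y < n | y != i) (if f y is Some j then w y j else 1).
  by apply: eq_bigr => y ne; rewrite upd_ne.
by rewrite /ow; case: o => [a|]; case: (f i) => [b|]; ring.
Qed.

Lemma upd_None_back {G i m} : G i = None -> upd (upd G i (Some m)) i None = G.
Proof. by move=> h; rewrite upd_upd -h upd_id. Qed.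

Lemma E1 G i m k : G i = None -> 0 < w i m ->
  (inforest w (upd G i (Some m)) && (narcs (upd G i (Some m)) == k.+1)) =
  [&& inforest w G, narcs G == k & ~~ rooted_at G m i].
Proof.
move=> Gi wim.
have hn := @narcs_upd G i (Some m); rewrite Gi /= addn0 addn1 in hn.
rewrite hn eqSS.
apply/idP/idP.
- case/andP => /forestP [haH acH] ->.
  have back := upd_None_back (m:=m) Gi.
  have acG : acyc G by rewrite -back; apply: (acyc_upd acH upd_ne); by rewrite upd_i.
  have haG : arcsP G by rewrite -back; apply: arcs_upd.
  apply/and3P; split => //; first by apply/forestP.
  apply/negP => /rooted_it [p hp].
  have avH := acyc_next_avoid acH (upd_i (f:=G) (o:=Some m)).
  have e := agree_avoid (f:=upd G i (Some m)) (g:=G) (i:=i) (x:=m) upd_ne' avH p.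
  by move: (avH p); rewrite -e hp eqxx.
- case/and3P => /forestP [haG acG] /eqP -> nr; rewrite eqxx andbT; apply/forestP; split.
  + by apply: arcs_upd => // m' [<-].
  + apply: (acyc_upd acG); first exact: upd_ne.
    rewrite upd_i => p; apply/negP => /eqP hp; move/negP: nr; apply.
    exact: (rootedI acG Gi hp).
Qed.

Lemma E2 G i j m : i != j -> G i = None -> acyc (upd G i (Some m)) ->
  rooted_at (upd G i (Some m)) i j = rooted_at G m j.
Proof.
move=> ij Gi acH.
have back := upd_None_back (m:=m) Gi.
have acG : acyc G by rewrite -back; apply: (acyc_upd acH upd_ne); by rewrite upd_i.
have hGH : forall y, y != i -> G y = upd G i (Some m) y by exact: upd_ne'.
have hHG : forall y, y != i -> upd G i (Some m) y = G y by exact: upd_ne.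
have ji : j != i by rewrite eq_sym.
apply/idP/idP.
- move=> r; have hj := rooted_root r; have [[|k] hk] := rooted_it r.
    by move: hk; rewrite /it /= => -[] e; move: ij; rewrite e eqxx.
  rewrite itSr upd_i in hk.
  have avH := acyc_next_avoid acH (upd_i (f:=G) (o:=Some m)).
  apply: (rootedI (k:=k) acG); first by rewrite hGH.
  by rewrite (agree_avoid hGH avH).
- move=> r; have hj := rooted_root r; have [k hk] := rooted_it r.
  have av : avoid G m i.
    move=> p; apply/negP => /eqP hp.
    by move: ij; rewrite (two_roots Gi hj hp hk) eqxx.
  apply: (rootedI (k:=k.+1) acH); first by rewrite hHG.
  by rewrite itSr upd_i (agree_avoid hHG av).
Qed.
Definition src i j k G m :=
  [&& inforest w G, narcs G == k, G i != None, rooted_at G m j & ~~ rooted_at G i j].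
Definition tgt i j k G m :=
  [&& inforest w G, narcs G == k, rooted_at G i j & ~~ rooted_at G m j].

Definition Phi i (p : FF * 'I_n) : FF * 'I_n :=
  (upd p.1 i (Some p.2), odflt p.2 (p.1 i)).

Lemma PhiK i (p : FF * 'I_n) : p.1 i != None -> Phi i (Phi i p) = p.
Proof.
case: p => G m /=; case E: (G i) => [m0|] // _.
by rewrite /Phi /= upd_i /= upd_upd E /= -E upd_id.
Qed.

Lemma narcs_same {G i m} : G i != None -> narcs (upd G i (Some m)) = narcs G.
Proof.
move=> ne; have := @narcs_upd G i (Some m); rewrite ne /=.
by move/eqP; rewrite eqn_add2r => /eqP.
Qed.

Lemma phi_src i j k G m : i != j -> 0 < w i m -> src i j k G m ->
  tgt i j k (Phi i (G, m)).1 (Phi i (G, m)).2 && (0 < w i (Phi i (G, m)).2).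
Proof.
move=> ij wim /and5P [/forestP [haG acG] nk Gi rmj nrij].
case E: (G i) Gi => [m0|] // _; rewrite /Phi /= E /=.
have hj := rooted_root rmj; have [q hq] := rooted_it rmj.
have av : avoid G m i.
  move=> p; apply/negP => /eqP hp; move/negP: nrij; apply.
  exact: (rootedI acG hj (reach_root hj hq hp)).
have hHG : forall y, y != i -> upd G i (Some m) y = G y by exact: upd_ne.
have acH : acyc (upd G i (Some m)) by apply: (acyc_upd acG hHG); rewrite upd_i.
have ji : j != i by rewrite eq_sym.
rewrite (haG _ _ E) andbT; apply/and4P; split.
- by apply/forestP; split => //; apply: arcs_upd => // m' [<-].
- by rewrite narcs_same ?E.
- apply: (rootedI (k:=q.+1) acH); first by rewrite hHG.
  by rewrite itSr upd_i (agree_avoid hHG av).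
- apply/negP => r; have [p hp] := rooted_it r.
  have av0 := acyc_next_avoid acG E.
  rewrite (agree_avoid hHG av0) in hp.
  move/negP: nrij; apply; apply: (rootedI (k:=p.+1) acG hj).
  by rewrite itSr E.
Qed.

Lemma phi_tgt i j k G m : i != j -> 0 < w i m -> tgt i j k G m ->
  src i j k (Phi i (G, m)).1 (Phi i (G, m)).2 && (0 < w i (Phi i (G, m)).2).
Proof.
move=> ij wim /and4P [/forestP [haG acG] nk rij nrmj].
have := rooted_nonroot rij ij.
case E: (G i) => [m0|] // _; rewrite /Phi /= E /=.
have hj := rooted_root rij; have [q hq] := rooted_it rij.
have av : avoid G m i.
  move=> p; apply/negP => /eqP hp; move/negP: nrmj; apply.
  apply: (rootedI (k:=(q + p)%N) acG hj).
  by rewrite itD hp -/(it G q i) hq.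
have hHG : forall y, y != i -> upd G i (Some m) y = G y by exact: upd_ne.
have acH : acyc (upd G i (Some m)) by apply: (acyc_upd acG hHG); rewrite upd_i.
have ji : j != i by rewrite eq_sym.
rewrite (haG _ _ E) andbT; apply/and5P; split.
- by apply/forestP; split => //; apply: arcs_upd => // m' [<-].
- by rewrite narcs_same ?E.
- by rewrite upd_i.
- case: q hq => [|q] hq.
    by move: hq; rewrite /it /= => -[] e; move: ij; rewrite e eqxx.
  rewrite itSr E in hq.
  have av0 := acyc_next_avoid acG E.
  apply: (rootedI (k:=q) acH); first by rewrite hHG.
  by rewrite (agree_avoid hHG av0).
- apply/negP => r; have [[|p] hp] := rooted_it r.
    by move: hp; rewrite /it /= => -[] e; move: ij; rewrite e eqxx.
  rewrite itSr upd_i (agree_avoid hHG av) in hp.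
  by move/negP: nrmj; apply; apply: (rootedI acG hj hp).
Qed.
Lemma updNone_eq G i : (upd G i None == G) = (G i == None).
Proof.
apply/eqP/eqP => [<-|h]; first by rewrite upd_i.
by rewrite -h upd_id.
Qed.

Lemma pairL i (P : pred FF) :
  \sum_(H : FF | (H i != None) && P H) fweight w H =
  \sum_(p : FF * 'I_n | (p.1 i == None) && P (upd p.1 i (Some p.2))) w i p.2 * fweight w p.1.
Proof.
rewrite (reindex_onto (fun p : FF * 'I_n => upd p.1 i (Some p.2))
                      (fun H => (upd H i None, odflt i (H i)))); last first.
  by move=> H /andP [nN _]; case E: (H i) nN => [a|] // _; rewrite /= upd_upd -E upd_id.
apply: eq_big => [[G m]|[G m]] /=.
  by rewrite upd_i /= upd_upd xpair_eqE eqxx andbT updNone_eq andbC.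
move=> /andP [_]; rewrite upd_upd xpair_eqE updNone_eq => /andP [/eqP Gi _].
by have := fweight_upd G i (Some m); rewrite Gi /= mulr1 mulrC => ->.
Qed.

Lemma sum_ind {T : finType} (P : pred T) (F : T -> R) :
  \sum_(p | P p) F p = \sum_p (P p)%:R * F p.
Proof. by rewrite big_mkcond; apply: eq_bigr => p _; case: (P p); rewrite ?mul1r ?mul0r. Qed.

Definition X i (p : FF * 'I_n) := w i p.2 * fweight w p.1.

Lemma sum_pair i (P : FF -> 'I_n -> bool) :
  \sum_m w i m * \sum_(G | P G m) fweight w G = \sum_(p | P p.1 p.2) X i p.
Proof.
under eq_bigr do rewrite sum_ind mulr_sumr.
rewrite exchange_big /= pair_bigA [RHS]sum_ind; apply: eq_bigr => [[G m]] _ /=.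
by rewrite /X mulrCA.
Qed.
Hypothesis hnonneg : forall i j, 0 <= w i j.

Definition qq k i j := \sum_(f | [&& inforest w f, narcs f == k & rooted_at f i j]) fweight w f.

Lemma rooted_uniq {G x i j} : acyc G -> rooted_at G x i -> rooted_at G x j -> i = j.
Proof.
move=> ac ri rj; have [a ha] := rooted_it ri; have [b hb] := rooted_it rj.
exact: (two_roots (rooted_root ri) (rooted_root rj) ha hb).
Qed.

Lemma e1_off k i j G m : i != j -> 0 < w i m ->
  ((G i == None) && [&& inforest w (upd G i (Some m)), narcs (upd G i (Some m)) == k.+1
                      & rooted_at (upd G i (Some m)) i j])
  = (G i == None) && [&& inforest w G, narcs G == k & rooted_at G m j].
Proof.
move=> ij wpos; case E: (G i) => [a|] //=.
rewrite andbA; have := E1 G i m k E wpos.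
case h: (inforest w (upd G i (Some m)) && (narcs (upd G i (Some m)) == k.+1)) => /esym.
- case/and3P => fG nk _; rewrite fG nk /=.
  case/andP: h => /forestP [_ acH] _; exact: E2.
- move=> hF; apply/esym/negP => /and3P [fG nk rmj].
  move: hF; rewrite fG nk /= => /negbT; rewrite negbK => rmi.
  have [_ acG] := iffLR (forestP G) fG.
  by move: ij; rewrite (rooted_uniq acG rmi rmj) eqxx.
Qed.
Lemma w0 i m : ~~ (0 < w i m) -> w i m = 0.
Proof. by move=> h; apply/eqP; rewrite eq_le hnonneg andbT leNgt. Qed.

Lemma point_off k i j (p : FF * 'I_n) : i != j ->
  ((p.1 i == None) && [&& inforest w (upd p.1 i (Some p.2)), narcs (upd p.1 i (Some p.2)) == k.+1
                      & rooted_at (upd p.1 i (Some p.2)) i j])%:R * X i p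
  + ([&& inforest w p.1, narcs p.1 == k & rooted_at p.1 i j]%:R * X i p
     - [&& inforest w p.1, narcs p.1 == k & rooted_at p.1 p.2 j]%:R * X i p)
  = (tgt i j k p.1 p.2 && (0 < w i p.2))%:R * X i p
    - (src i j k p.1 p.2 && (0 < w i p.2))%:R * X i p.
Proof.
case: p => G m /= ij.
case: (boolP (0 < w i m)) => wpos; last first.
  by rewrite /X /= w0 // mul0r !mulr0 subr0 addr0.
rewrite e1_off // /src /tgt !andbT.
have nr : rooted_at G i j -> G i != None by move=> r; exact: rooted_nonroot r ij.
move: nr; case: (G i == None); case: (inforest w G); case: (narcs G == k);
  case: (rooted_at G i j); case: (rooted_at G m j) => //= nr;
  try (by have := nr is_true_true); ring.
Qed.

Lemma invol k i j : i != j ->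
  \sum_(p | src i j k p.1 p.2 && (0 < w i p.2)) X i p =
  \sum_(p | tgt i j k p.1 p.2 && (0 < w i p.2)) X i p.
Proof.
move=> ij.
rewrite (reindex_onto (Phi i) (Phi i)); last first.
  by move=> [G m] /andP [/and5P [_ _ ne _ _] _]; apply: PhiK.
apply: eq_big => [[G m]|[G m]].
- apply/idP/idP.
  + case/andP => hs /eqP hK.
    have := phi_src _ _ _ _ _ ij (proj2 (andP hs)) (proj1 (andP hs)).
    by rewrite -surjective_pairing hK.
  + move=> ht; case/andP: (ht) => /and4P [_ _ rij _] wpos.
    have ne := rooted_nonroot rij ij.
    rewrite (phi_tgt _ _ _ _ _ ij wpos) /=; [by apply/eqP; apply: PhiK | by case/andP: ht].
- move=> /andP [_ /eqP hK].
  have ne : G i != None.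
    apply/negP => /eqP Gi; move: hK; rewrite /Phi /= Gi /= upd_i upd_upd => -[] e.
    by move: (congr1 (fun f : FF => f i) e); rewrite upd_i Gi.
  case E: (G i) ne => [m0|] // _.
  rewrite /X /Phi /= E /=.
  have := fweight_upd G i (Some m); rewrite E /= => h.
  by rewrite mulrC h mulrC.
Qed.
Lemma comb_sums {T : finType} (A B C D E : pred T) (F : T -> R) :
  (forall p, (A p)%:R * F p + ((B p)%:R * F p - (C p)%:R * F p)
             = (D p)%:R * F p - (E p)%:R * F p) ->
  \sum_(p | A p) F p + (\sum_(p | B p) F p - \sum_(p | C p) F p)
  = \sum_(p | D p) F p - \sum_(p | E p) F p.
Proof.
move=> h; rewrite (sum_ind A) (sum_ind B) (sum_ind C) (sum_ind D) (sum_ind E).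
rewrite -!sumrB -big_split /=; exact: eq_bigr.
Qed.

Lemma rec_off k i j : i != j -> qq k.+1 i j + \sum_m w i m * (qq k i j - qq k m j) = 0.
Proof.
move=> ij.
have h1 : qq k.+1 i j = \sum_(p : FF * 'I_n | (p.1 i == None) && [&& inforest w (upd p.1 i (Some p.2)),
       narcs (upd p.1 i (Some p.2)) == k.+1 & rooted_at (upd p.1 i (Some p.2)) i j]) X i p.
  rewrite /X -(pairL i (fun H => [&& inforest w H, narcs H == k.+1 & rooted_at H i j])).
  apply: eq_bigl => H /=; case r: (rooted_at H i j); rewrite ?andbF //.
  by rewrite (rooted_nonroot r ij).
have h2 : \sum_m w i m * (qq k i j - qq k m j) =
    \sum_m w i m * qq k i j - \sum_m w i m * qq k m j.
  by rewrite -sumrB; apply: eq_bigr => m _; rewrite mulrBr.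
rewrite h2 h1 /qq.
rewrite (sum_pair i (fun G m => [&& inforest w G, narcs G == k & rooted_at G i j])).
rewrite (sum_pair i (fun G m => [&& inforest w G, narcs G == k & rooted_at G m j])).
rewrite (comb_sums _ _ _ (fun p : FF * 'I_n => tgt i j k p.1 p.2 && (0 < w i p.2))
                   (fun p : FF * 'I_n => src i j k p.1 p.2 && (0 < w i p.2))).
  by rewrite invol // subrr.
by move=> p; apply: point_off.
Qed.
Lemma comb_sums2 {T : finType} (A B C : pred T) (F : T -> R) :
  (forall p, (B p)%:R * F p - (C p)%:R * F p = (A p)%:R * F p) ->
  \sum_(p | B p) F p - \sum_(p | C p) F p = \sum_(p | A p) F p.
Proof.
move=> h; rewrite (sum_ind A) (sum_ind B) (sum_ind C) -sumrB; exact: eq_bigr.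
Qed.

Lemma point_diag k i (p : FF * 'I_n) :
  [&& inforest w p.1, narcs p.1 == k & rooted_at p.1 i i]%:R * X i p
  - [&& inforest w p.1, narcs p.1 == k & rooted_at p.1 p.2 i]%:R * X i p
  = ((p.1 i == None) && (inforest w (upd p.1 i (Some p.2)) && (narcs (upd p.1 i (Some p.2)) == k.+1)))%:R * X i p.
Proof.
case: p => G m /=.
case: (boolP (0 < w i m)) => wpos; last first.
  by rewrite /X /= w0 // mul0r !mulr0 subr0.
have e : (G i == None) && (inforest w (upd G i (Some m)) && (narcs (upd G i (Some m)) == k.+1))
       = (G i == None) && [&& inforest w G, narcs G == k & ~~ rooted_at G m i].
  by case E: (G i) => [a|] //=; rewrite E1.
rewrite e rooted_ii.
have nr : rooted_at G m i -> G i == None by move=> r; apply/eqP; exact: rooted_root r.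
move: nr; case: (G i == None); case: (inforest w G); case: (narcs G == k);
  case: (rooted_at G m i) => //= nr;
  try (by have := nr is_true_true); ring.
Qed.

Lemma rec_diag k i : qq k.+1 i i + \sum_m w i m * (qq k i i - qq k m i) = sigmak w k.+1.
Proof.
rewrite /sigmak (bigID (fun f => rooted_at f i i)) /=.
have -> : \sum_(f | (inforest w f && (narcs f == k.+1)) && rooted_at f i i) fweight w f = qq k.+1 i i.
  by apply: eq_bigl => f; rewrite andbA.
congr (_ + _).
have -> : \sum_(f | (inforest w f && (narcs f == k.+1)) && ~~ rooted_at f i i) fweight w f
   = \sum_(f : FF | (f i != None) && (inforest w f && (narcs f == k.+1))) fweight w f.
  by apply: eq_bigl => f; rewrite rooted_ii andbC.
rewrite (pairL i (fun H => inforest w H && (narcs H == k.+1))) -/(X i _).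
have h2 : \sum_m w i m * (qq k i i - qq k m i) =
    \sum_m w i m * qq k i i - \sum_m w i m * qq k m i.
  by rewrite -sumrB; apply: eq_bigr => m _; rewrite mulrBr.
rewrite h2 /qq.
rewrite (sum_pair i (fun G m => [&& inforest w G, narcs G == k & rooted_at G i i])).
rewrite (sum_pair i (fun G m => [&& inforest w G, narcs G == k & rooted_at G m i])).
apply: comb_sums2 => p; exact: point_diag.
Qed.
Definition fe : FF := [ffun => None].

Lemma narcs0 f : narcs f = 0%N -> f = fe.
Proof.
move=> h; apply/ffunP => x; rewrite ffunE.
apply/eqP; apply: contraT => nx.
by move: (card0_eq h x); rewrite !inE nx.
Qed.

Lemma it_fe k x : it fe k.+1 x = None.
Proof. by rewrite itSr ffunE. Qed.

Lemma fe_forest : (0 < n)%N -> inforest w fe.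
Proof.
move=> n0; apply/forestP; split; first by move=> i j; rewrite ffunE.
by move=> x; rewrite /it -[X in iter X](prednK n0) -/(it fe _ x) it_fe.
Qed.

Lemma rooted_fe i j : rooted_at fe i j = (i == j).
Proof.
apply/idP/idP.
- move=> r; have [[|k] hk] := rooted_it r.
    by move: hk; rewrite /it /= => -[] ->.
  by rewrite it_fe in hk.
- by move/eqP => <-; rewrite rooted_ii ffunE.
Qed.

Lemma narcs_fe : narcs fe = 0%N.
Proof. by apply: eq_card0 => x; rewrite !inE ffunE. Qed.

Lemma fweight_fe : fweight w fe = 1.
Proof. by rewrite /fweight big1 // => i _; rewrite ffunE. Qed.

Lemma Fk0 f : (0 < n)%N -> (inforest w f && (narcs f == 0%N)) = (f == fe).
Proof.
move=> n0; apply/andP/eqP => [[_ /eqP h]|->]; first exact: narcs0.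
by rewrite fe_forest // narcs_fe.
Qed.

Lemma sigma0 : (0 < n)%N -> sigmak w 0 = 1.
Proof.
move=> n0; rewrite /sigmak (eq_bigl (pred1 fe)) ?big_pred1_eq ?fweight_fe //.
by move=> f; rewrite Fk0.
Qed.

Lemma qq0 i j : (0 < n)%N -> qq 0 i j = (i == j)%:R.
Proof.
move=> n0; rewrite /qq (eq_bigl (fun f => (f == fe) && (i == j))); last first.
  by move=> f; rewrite andbA Fk0 //; case: eqP => // ->; rewrite rooted_fe.
case: (i == j); last by rewrite big_pred0 // => f; rewrite andbF.
by rewrite (eq_bigl (pred1 fe)) ?big_pred1_eq ?fweight_fe // => f; rewrite andbT.
Qed.
Lemma bigmin_le_seq (r : seq FF) (P : pred FF) (h : FF -> nat) f :
  f \in r -> P f -> (\big[minn/n]_(g <- r | P g) h g <= h f)%N.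
Proof.
elim: r => // x r IH; rewrite inE big_cons => /orP [/eqP <-|fr] Pf.
  by rewrite Pf geq_minl.
case: (P x); last exact: IH.
by apply: leq_trans (geq_minr _ _) (IH fr Pf).
Qed.

Lemma bigmin_cases (r : seq FF) (P : pred FF) (h : FF -> nat) :
  (forall g, h g <= n)%N ->
  \big[minn/n]_(g <- r | P g) h g = n \/ exists g, P g /\ \big[minn/n]_(g <- r | P g) h g = h g.
Proof.
move=> hn; elim: r => [|x r IH]; first by left; rewrite big_nil.
rewrite big_cons; case Px: (P x) => //.
case: IH => [->|[g [Pg ->]]].
  by right; exists x; split => //; apply/minn_idPl.
rewrite /minn; case: ltnP => _; right; [exists x | exists g]; by [].
Qed.

Lemma dim_le {f} : inforest w f -> (inforest_dim w <= ntrees f)%N.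
Proof. by move=> Ff; apply: bigmin_le_seq => //; exact: mem_index_enum. Qed.

Lemma ntrees_le f : (ntrees f <= n)%N.
Proof. have := ntrees_narcs f; lia. Qed.

Lemma dim_attained : (0 < n)%N -> exists f, inforest w f /\ ntrees f = inforest_dim w.
Proof.
move=> n0; case: (bigmin_cases (index_enum FF) (inforest w) (@ntrees n) ntrees_le) => [h|[g [Pg h]]].
- exists fe; split; first exact: fe_forest.
  have := ntrees_narcs fe; rewrite narcs_fe addn0 => ->.
  by rewrite /inforest_dim h.
- by exists g; split => //; rewrite /inforest_dim h.
Qed.

Lemma narcs_bound {f} : inforest w f -> (narcs f <= n - inforest_dim w)%N.
Proof.
move=> Ff; have := dim_le Ff; have := ntrees_narcs f. lia.
Qed.
Lemma lap_row (Q : 'M[R]_n) i j :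
  (laplacian w *m Q) i j = \sum_m w i m * (Q i j - Q m j).
Proof.
rewrite mxE (bigD1 i) //= [RHS](bigD1 i) //= subrr mulr0 add0r mxE eqxx.
rewrite mulr_suml -big_split /=; apply: eq_bigr => m ne.
by rewrite mxE eq_sym (negbTE ne) mulrBr mulNr.
Qed.

Lemma QkE k i j : Qk w k i j = qq k i j.
Proof. by rewrite mxE. Qed.

Lemma rec_mx k : Qk w k.+1 + laplacian w *m Qk w k = sigmak w k.+1 *: 1%:M.
Proof.
apply/matrixP => i j; rewrite mxE lap_row.
under eq_bigr do rewrite !QkE.
rewrite !QkE !mxE.
case: (eqVneq i j) => [<-|ij]; rewrite ?mulr1 ?mulr0.
- exact: rec_diag.
- exact: rec_off.
Qed.

Lemma Q0 : (0 < n)%N -> Qk w 0 = 1%:M.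
Proof. by move=> n0; apply/matrixP => i j; rewrite !mxE -/(qq 0 i j) qq0. Qed.

Lemma vanish {k} : (n - inforest_dim w < k)%N -> sigmak w k = 0 /\ Qk w k = 0.
Proof.
move=> lt; split.
  rewrite /sigmak big_pred0 // => f; apply/negP => /andP [Ff /eqP nk].
  by move: (narcs_bound Ff); rewrite nk leqNgt lt.
apply/matrixP => i j; rewrite !mxE big_pred0 // => f; apply/negP => /and3P [Ff /eqP nk _].
by move: (narcs_bound Ff); rewrite nk leqNgt lt.
Qed.

Lemma main_identity tau : (0 < n)%N ->
  (1%:M + tau *: laplacian w) *m Q_t w tau = sigma_t w tau *: 1%:M.
Proof.
move=> n0.
set N := (n - inforest_dim w)%N.
pose g (k : nat) : 'M[R]_n := tau ^+ k *: (sigmak w k *: 1%:M - Qk w k).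
have g0 : g 0%N = 0 by rewrite /g sigma0 // Q0 // scale1r subrr scaler0.
have gN : g N.+1 = 0 by rewrite /g; case: (vanish (ltnSn N)) => -> ->; rewrite scale0r subr0 scaler0.
have shift : \sum_(k < N.+1) g k.+1 = \sum_(k < N.+1) g k.
  have e1 : \sum_(k < N.+2) g k = g 0%N + \sum_(k < N.+1) g k.+1.
    by rewrite big_ord_recl; congr (_ + _); apply: eq_bigr => k _; rewrite lift0.
  have e2 : \sum_(k < N.+2) g k = \sum_(k < N.+1) g k + g N.+1 by rewrite big_ord_recr.
  by move: e1; rewrite e2 g0 gN add0r addr0 => ->.
rewrite /Q_t -/N mulmxDl mul1mx -scalemxAl mulmx_sumr.
have -> : \sum_(k < N.+1) laplacian w *m (tau ^+ k *: Qk w k)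
        = \sum_(k < N.+1) tau ^+ k *: (sigmak w k.+1 *: 1%:M - Qk w k.+1).
  apply: eq_bigr => k _; rewrite -scalemxAr; congr (_ *: _).
  by rewrite -(rec_mx k) addrC addKr.
rewrite scaler_sumr.
have -> : \sum_(k < N.+1) tau *: (tau ^+ k *: (sigmak w k.+1 *: 1%:M - Qk w k.+1))
        = \sum_(k < N.+1) g k.+1.
  by apply: eq_bigr => k _; rewrite /g scalerA exprS.
rewrite shift /g -big_split /= /sigma_t -/N scaler_suml.
apply: eq_bigr => k _.
by rewrite scalerBr addrC subrK scalerA mulrC.
Qed.
Lemma fweight_ge0 f : 0 <= fweight w f.
Proof. by apply: prodr_ge0 => i _; case: (f i) => [j|] //; exact: hnonneg. Qed.

Lemma sigmak_ge0 k : 0 <= sigmak w k.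
Proof. by apply: sumr_ge0 => f _; exact: fweight_ge0. Qed.

Lemma sigma_t_gt0 tau : 0 <= tau -> (0 < n)%N -> 0 < sigma_t w tau.
Proof.
move=> t0 n0; rewrite /sigma_t big_ord_recl /= sigma0 // expr0 mulr1.
apply: (lt_le_trans ltr01); rewrite lerDl; apply: sumr_ge0 => k _.
by apply: mulr_ge0; [exact: sigmak_ge0 | exact: exprn_ge0].
Qed.

Lemma sigmaN_gt0 : (0 < n)%N -> 0 < sigmak w (n - inforest_dim w).
Proof.
move=> n0; have [f [Ff nt]] := dim_attained n0.
have nk : narcs f = (n - inforest_dim w)%N by have := ntrees_narcs f; lia.
have fpos : 0 < fweight w f.
  apply: prodr_gt0 => i _; case E: (f i) => [j|] //.
  by have [ha _] := iffLR (forestP f) Ff; exact: ha E.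
rewrite /sigmak (bigD1 f) /=; last by rewrite Ff nk eqxx.
apply: (lt_le_trans fpos); rewrite lerDl; apply: sumr_ge0 => g _; exact: fweight_ge0.
Qed.

Lemma invmx_eq tau : 0 <= tau -> (0 < n)%N ->
  invmx (1%:M + tau *: laplacian w) = J_t w tau.
Proof.
move=> t0 n0.
have h : (1%:M + tau *: laplacian w) *m J_t w tau = 1%:M.
  rewrite /J_t -scalemxAr main_identity // scalerA mulVf ?scale1r //.
  by apply: lt0r_neq0; exact: sigma_t_gt0.
have [uA _] := mulmx1_unit h.
by have := mulKmx uA (J_t w tau); rewrite h mulmx1.
Qed.
End Forest.
End Paths.
Section Lim.
Variable R : realType.

Lemma cvg_pow (f : R -> R) (a : R) m : f x @[x --> +oo] --> a -> f x ^+ m @[x --> +oo] --> a ^+ m.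
Proof.
move=> hf; elim: m => [|m IH].
  under eq_cvg do rewrite expr0; exact: cvg_cst.
under eq_cvg do rewrite exprS.
rewrite exprS; exact: cvgM.
Qed.

Lemma cvg_inv_id : x^-1 @[x --> +oo] --> (0 : R).
Proof.
have := @gtr0_cvgV0 R R +oo _ id.
move=> h; apply/h; last exact: cvg_id.
by near=> x; near: x; apply: nbhs_pinfty_gt.
Unshelve. all: by end_near.
Qed.

End Lim.

Section Lim1b.
Variable R : realType.
Lemma cvg_inv_pow m : (fun x : R => x^-1 ^+ m) @ +oo --> (0 : R) ^+ m.
Proof.
elim: m => [|m IH].
  under eq_cvg do rewrite expr0; rewrite expr0; exact: cvg_cst.
under eq_cvg do rewrite exprS.
rewrite exprS; apply: cvgM => //; exact: cvg_inv_id.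
Qed.
End Lim1b.
Section Lim2.
Variable R : realType.

Lemma pow_split (t : R) l N : t != 0 -> (l <= N)%N -> t ^+ l = t ^+ N * t^-1 ^+ (N - l).
Proof.
move=> t0 le; rewrite -{1}(subnK le) exprD exprVn mulrAC mulfV ?mul1r //.
exact: expf_neq0.
Qed.

Lemma ratio_eq (t : R) N (s : nat -> R) (k : 'I_N.+1) : t != 0 ->
  (\sum_(l < N.+1) s l * t ^+ l)^-1 * t ^+ k =
  (\sum_(l < N.+1) s l * t^-1 ^+ (N - l))^-1 * t^-1 ^+ (N - k).
Proof.
move=> t0.
have -> : \sum_(l < N.+1) s l * t ^+ l = t ^+ N * \sum_(l < N.+1) s l * t^-1 ^+ (N - l).
  rewrite mulr_sumr; apply: eq_bigr => l _.
  by rewrite (pow_split _ _ _ t0 (ltnSE (ltn_ord l))) mulrCA.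
rewrite (pow_split _ _ _ t0 (ltnSE (ltn_ord k))) invfM.
have tN : t ^+ N != 0 by exact: expf_neq0.
set S := \sum_(l < N.+1) _; set u := t^-1 ^+ _.
by rewrite -mulrA (mulrCA S^-1) mulKf.
Qed.
End Lim2.
Section Lim3.
Variable R : realType.

Lemma ratio_lim n N (s : nat -> R) (Q : nat -> 'M[R]_n) : s N != 0 ->
  (fun tau : R => (\sum_(k < N.+1) s k * tau ^+ k)^-1 *: \sum_(k < N.+1) tau ^+ k *: Q k)
    @ +oo --> (s N)^-1 *: Q N.
Proof.
move=> sN.
pose S (x : R) := \sum_(l < N.+1) s l * x ^+ (N - l).
have hS : S (x^-1) @[x --> +oo] --> s N.
  have -> : s N = \sum_(l < N.+1) s l * 0 ^+ (N - l).
    rewrite big_ord_recr /= subnn expr0 mulr1 big1 ?add0r // => l _.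
    by rewrite expr0n subn_eq0 leqNgt ltn_ord /= mulr0.
  apply: cvg_big; first exact: add_continuous.
  move=> l _; apply: cvgM; first exact: cvg_cst.
  exact: cvg_inv_pow.
pose G (x : R) := \sum_(k < N.+1) ((S x^-1)^-1 * x^-1 ^+ (N - k)) *: Q k.
have eqn : \forall x \near +oo, G x =
  (\sum_(k < N.+1) s k * x ^+ k)^-1 *: \sum_(k < N.+1) x ^+ k *: Q k.
  near=> x.
  have x0 : x != 0 by apply: lt0r_neq0; near: x; apply: nbhs_pinfty_gt.
  rewrite scaler_sumr /G; apply: eq_bigr => k _; rewrite scalerA.
  by rewrite ratio_eq.
apply: cvg_trans (near_eq_cvg eqn) _.
have -> : (s N)^-1 *: Q N = \sum_(k < N.+1) ((s N)^-1 * 0 ^+ (N - k)) *: Q k.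
  rewrite big_ord_recr /= subnn expr0 mulr1 big1 ?add0r // => k _.
  by rewrite expr0n subn_eq0 leqNgt ltn_ord /= mulr0 scale0r.
apply: cvg_big; first exact: add_continuous.
move=> k _; apply: cvgZl; apply: cvgM.
  exact: cvgV.
exact: cvg_inv_pow.
Unshelve. all: by end_near.
Qed.
End Lim3.

Theorem proposition11 (R : realType) (n : nat) (w : 'M[R]_n)
  (hn : (1 < n)%N)
  (hloop : forall i, w i i = 0)
  (hnonneg : forall i j, 0 <= w i j) :
  (J_t w @ +oo --> J_tilde w) /\
  ((fun tau : R => invmx (1%:M + tau *: laplacian w)) @ +oo --> J_tilde w).
Proof.
have n0 : (0 < n)%N by apply: ltnW.
have sN := @sigmaN_gt0 n R w hnonneg n0.
have p1 : J_t w @ +oo --> J_tilde w.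
  exact: (@ratio_lim R n (n - inforest_dim w) (sigmak w) (Qk w) (lt0r_neq0 sN)).
split => //.
have eqn : \forall tau \near +oo, J_t w tau = invmx (1%:M + tau *: laplacian w).
  near=> tau; rewrite invmx_eq //; apply: ltW; near: tau; apply: nbhs_pinfty_gt.
exact: cvg_trans (near_eq_cvg eqn) p1.
Unshelve. all: by end_near.
Qed.
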